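(* Let $S$ be a numerical semigroup with minimal generators $g_1<\dots<g_\nu$, multiplicity $m=g_1$ and Frobenius number $f$. The following are equivalent: (i) $\mathrm{Ap}(S)$ is $\alpha$-rectangular, i.e. $\mathrm{Ap}(S)=\{\sum_{i=2}^{\nu}\lambda_i g_i : 0\le\lambda_i\le\alpha_i\}$; (ii) the poset $(\mathrm{Ap}(S),\preceq)$ has exactly one maximal element, and this element has a unique representation; (iii) $S$ is symmetric and $\mathrm{Ap}(S)$ is of unique expression; (iv) $f+m=\sum_{i=2}^{\nu}\alpha_i g_i$; (v) $m=\prod_{i=2}^{\nu}(\alpha_i+1)$.
   Context: A numerical semigroup is a submonoid $S$ of $(\mathbb N,+)$ with finite complement in $\mathbb N$; $g_1<\dots<g_\nu$ denotes its minimal system of generators, $m=g_1$ its multiplicity and $f=\max(\mathbb Z\setminus S)$ its Frobenius number. For $s,t\in S$, $s\preceq t$ means $t-s\in S$. The Apéry set is $\mathrm{Ap}(S)=\{s\in S: s-m\notin S\}$. A representation of $s\in S$ is an expression $s=\sum_{i=1}^\nu \lambda_i g_i$ with $\lambda_i\in\mathbb N$. For $i=2,\dots,\nu$, $\alpha_i=\max\{h\in\mathbb N: hg_i\in\mathrm{Ap}(S)\}$. $S$ is symmetric if for every $x\in\mathbb Z$: $x\in S\iff f-x\notin S$. $\mathrm{Ap}(S)$ is of unique expression if every element of $\mathrm{Ap}(S)$ has a unique representation. *)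

(* Defs.v *)
From Stdlib Require Import ZArith.
From mathcomp Require Import all_boot.
Set Implicit Arguments. Unset Strict Implicit. Unset Printing Implicit Defensive.

Definition numerical_semigroup (S : nat -> Prop) : Prop :=
  S 0 /\ (forall x y, S x -> S y -> S (x + y)) /\
  exists N, forall n, N <= n -> S n.

Definition inZ (S : nat -> Prop) (x : Z) : Prop :=
  exists n : nat, x = Z.of_nat n /\ S n.

(* s = sum_i lam_i g_i, the (0-based) indices of gs being 0 .. size gs - 1. *)
Definition is_rep (gs : seq nat) (s : nat) (lam : nat -> nat) : Prop :=
  s = \sum_(i < size gs) lam i * nth 0 gs i.

Definition generates (S : nat -> Prop) (gs : seq nat) : Prop :=
  forall x, S x <-> exists lam, is_rep gs x lam.

Definition min_gen_system (S : nat -> Prop) (gs : seq nat) : Prop :=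
  sorted ltn gs /\ generates S gs /\
  forall gs', subseq gs' gs -> generates S gs' -> gs' = gs.

Definition is_frobenius (S : nat -> Prop) (f : Z) : Prop :=
  ~ inZ S f /\ forall x : Z, (f < x)%Z -> inZ S x.

Definition Ap (S : nat -> Prop) (m s : nat) : Prop :=
  S s /\ ~ (m <= s /\ S (s - m)).

Definition preceq (S : nat -> Prop) (s t : nat) : Prop :=
  s <= t /\ S (t - s).

(* alpha_i = max {h : h g_i in Ap(S)}, for 0-based indices 1 <= i < size gs
   (i.e. paper's indices 2..nu). *)
Definition is_alpha (S : nat -> Prop) (gs : seq nat) (alpha : nat -> nat) : Prop :=
  forall i, 1 <= i < size gs ->
    Ap S (nth 0 gs 0) (alpha i * nth 0 gs i) /\
    forall h, Ap S (nth 0 gs 0) (h * nth 0 gs i) -> h <= alpha i.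

Definition symmetric_sg (S : nat -> Prop) (f : Z) : Prop :=
  forall x : Z, inZ S x <-> ~ inZ S (f - x)%Z.

Definition unique_rep (gs : seq nat) (s : nat) : Prop :=
  exists lam, is_rep gs s lam /\
    forall lam', is_rep gs s lam' -> forall i, i < size gs -> lam' i = lam i.

Definition Ap_unique_expression (S : nat -> Prop) (gs : seq nat) : Prop :=
  forall s, Ap S (nth 0 gs 0) s -> unique_rep gs s.

Definition Ap_maximal (S : nat -> Prop) (m a : nat) : Prop :=
  Ap S m a /\ forall b, Ap S m b -> preceq S a b -> b = a.

Definition alpha_rectangular (S : nat -> Prop) (gs : seq nat) (alpha : nat -> nat) : Prop :=
  forall x, Ap S (nth 0 gs 0) x <->
    exists lam : nat -> nat,
      (forall i, 1 <= i < size gs -> lam i <= alpha i) /\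
      x = \sum_(1 <= i < size gs) lam i * nth 0 gs i.

(* Main.v *)
Require Import Defs.
From Stdlib Require Import ZArith Lia Classical.
From mathcomp Require Import all_boot zify.
Set Implicit Arguments. Unset Strict Implicit.

Definition sig (gs : seq nat) (lam : nat -> nat) := \sum_(i < size gs) lam i * nth 0 gs i.

Lemma sig_add gs (l1 l2 : nat -> nat) :
  sig gs l1 + sig gs l2 = sig gs (fun i => l1 i + l2 i).
Proof. rewrite /sig -big_split /=; apply: eq_bigr => i _; by rewrite mulnDl. Qed.

Lemma sig_ext gs (l1 l2 : nat -> nat) :
  (forall i, i < size gs -> l1 i = l2 i) -> sig gs l1 = sig gs l2.
Proof. move=> h; rewrite /sig; apply: eq_bigr => i _; by rewrite h. Qed.

Lemma sig_split gs (lam : nat -> nat) i : i < size gs ->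
  sig gs lam = lam i * nth 0 gs i + sig gs (fun j => if j == i then 0 else lam j).
Proof.
move=> hi; rewrite /sig.
rewrite (bigD1 (Ordinal hi)) //= [X in _ = _ + X](bigD1 (Ordinal hi)) //= eqxx mul0n add0n.
congr (_ + _); apply: eq_bigr => j hj.
have -> : (nat_of_ord j == i) = false.
  apply/negbTE; apply: contra hj => /eqP e; apply/eqP; exact: val_inj.
by [].
Qed.

Lemma sig_split0 gs (lam : nat -> nat) : 0 < size gs ->
  sig gs lam = lam 0 * nth 0 gs 0 + \sum_(1 <= i < size gs) lam i * nth 0 gs i.
Proof.
rewrite /sig; case: gs => [//|g gs] _ /=.
rewrite big_ord_recl; congr (_ + _).
rewrite (@big_add1 _ _ _ 0) /= big_mkord; apply: eq_bigr => i _; done.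
Qed.


Lemma S_rep S gs (hg : generates S gs) (lam : nat -> nat) : S (sig gs lam).
Proof. apply/hg; by exists lam. Qed.

Lemma rep_S S gs (hg : generates S gs) x : S x -> exists lam, x = sig gs lam.
Proof. by move/hg => [lam h]; exists lam. Qed.

Lemma S_addn S (hS : numerical_semigroup S) x y : S x -> S y -> S (x + y).
Proof. by case: hS => _ [h _]; apply: h. Qed.

Lemma S_0 S (hS : numerical_semigroup S) : S 0.
Proof. by case: hS. Qed.

Lemma S_muln S (hS : numerical_semigroup S) k x : S x -> S (k * x).
Proof.
move=> hx; elim: k => [|k IH]; first by rewrite mul0n; exact: S_0.
by rewrite mulSn; apply: S_addn.
Qed.

Lemma S_gen S gs (hg : generates S gs) i : i < size gs -> S (nth 0 gs i).
Proof.
move=> hi; have := S_rep hg (fun j => if j == i then 1 else 0).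
rewrite (sig_split (fun j => if j == i then 1 else 0) hi) eqxx mul1n.
rewrite /sig big1 ?addn0 //.
move=> j _; by case: eqP.
Qed.

Lemma m_pos S gs alpha (hS : numerical_semigroup S) (hg : generates S gs)
  (ha : is_alpha S gs alpha) : 0 < nth 0 gs 0.
Proof.
rewrite lt0n; apply/negP => /eqP m0.
case: (leqP (size gs) 1) => hsz.
- have allz : forall x, S x -> x = 0.
    move=> x /(rep_S hg) [lam ->]; rewrite /sig; apply: big1 => i _.
    have : nat_of_ord i = 0 by have := ltn_ord i; lia.
    by move=> ->; rewrite m0 muln0.
  case: hS => _ [_ [N hN]].
  by have := allz _ (hN N.+1 (leqnSn N)).
- have := ha 1; rewrite hsz => /(_ isT) [[h1 h2] _]; apply: h2; rewrite m0 subn0; split => //.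
Qed.

Lemma Ap_decomp S m (hS : numerical_semigroup S) x : S x ->
  0 < m -> exists w k, Ap S m w /\ x = w + k * m.
Proof.
move=> + mpos; elim: x {-2}x (leqnn x) => [|n IH] x hx Sx.
- exists x, 0; split; last by rewrite addn0.
  split => //; case => h _; have : x = 0 by lia. move=> x0; lia.
- case: (classic (m <= x /\ S (x - m))) => [[hmx Sxm]|hn].
  + have [w [k [hw e]]] := IH (x - m) ltac:(lia) Sxm.
    exists w, k.+1; split => //; rewrite mulSn; lia.
  + exists x, 0; split; last by rewrite addn0. by split.
Qed.

Lemma Ap_down S m (hS : numerical_semigroup S) t u :
  Ap S m (t + u) -> S t -> S u -> Ap S m t.
Proof.
move=> [_ h] St Su; split => // [[hm Stm]]; apply: h; split; first lia.
have -> : t + u - m = (t - m) + u by lia.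
exact: S_addn.
Qed.

Lemma Ap_res_unique S m (hS : numerical_semigroup S) (Sm : S m) w w' :
  Ap S m w -> Ap S m w' -> w %% m = w' %% m -> w = w'.
Proof.
wlog le : w w' / w <= w'.
  move=> H a b e; case: (leqP w w') => h; first exact: H.
  by symmetry; apply: H => //; lia.
move=> [Sw _] [Sw' hw'] e.
have : m %| w' - w by rewrite -eqn_mod_dvd // e.
case/dvdnP => k hk; case: k hk => [|k] hk; first lia.
exfalso; apply: hw'; rewrite mulSn in hk; split; first lia.
have -> : w' - m = w + k * m by lia.
apply: S_addn => //; exact: S_muln.
Qed.

Lemma Ap_res_exists S m (hS : numerical_semigroup S) (mpos : 0 < m) x :
  exists w, Ap S m w /\ w %% m = x %% m.
Proof.
have [N hN] := hS.2.2.
have Sy : S (N * m + x %% m).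
  apply: hN; have : N <= N * m by rewrite leq_pmulr. lia.
have [w [k [hw e]]] := Ap_decomp hS Sy mpos.
exists w; split => //.
have : (N * m + x %% m) %% m = (w + k * m) %% m by rewrite e.
by rewrite modnMDl modn_mod addnC modnMDl.
Qed.

Lemma Ap_gt_nonS S m (hS : numerical_semigroup S) (Sm : S m) (mpos : 0 < m) w k :
  Ap S m w -> ~ S k -> w %% m = k %% m -> exists j, w = k + j.+1 * m.
Proof.
move=> [Sw hw] nk e.
case: (leqP w k) => h.
- exfalso; apply: nk.
  have : m %| k - w by rewrite -eqn_mod_dvd // e.
  case/dvdnP => j hj; have -> : k = w + j * m by lia.
  apply: S_addn => //; exact: S_muln.
- have : m %| w - k by rewrite -eqn_mod_dvd ?e //; lia.
  case/dvdnP => j hj; case: j hj => [|j] hj; first lia.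
  exists j; lia.
Qed.

Lemma rep_bounds S gs alpha (hS : numerical_semigroup S) (hg : generates S gs)
  (ha : is_alpha S gs alpha) s (lam : nat -> nat) :
  Ap S (nth 0 gs 0) s -> s = sig gs lam ->
  lam 0 = 0 /\ (forall i, 1 <= i < size gs -> lam i <= alpha i).
Proof.
move=> hA e.
have mpos := m_pos hS hg ha.
have sz : 0 < size gs by case: gs mpos {hA e hg ha}.
split.
- case E: (lam 0) => [//|l]; exfalso.
  move: hA => [_ h]; apply: h.
  have := sig_split lam sz; rewrite E => e2.
  set R := sig gs (fun j => if j == 0 then 0 else lam j) in e2.
  have SR : S R by apply: S_rep.
  split; first by rewrite e e2 mulSn; lia.
  have -> : s - nth 0 gs 0 = l * nth 0 gs 0 + R by rewrite e e2 mulSn; lia.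
  apply: S_addn => //; apply: S_muln => //; exact: S_gen.
- move=> i /andP [h1 h2].
  have := sig_split lam h2 => e2.
  set R := sig gs (fun j => if j == i then 0 else lam j) in e2.
  have SR : S R by apply: S_rep.
  have hA' : Ap S (nth 0 gs 0) (lam i * nth 0 gs i).
    apply: (Ap_down hS (u := R)); first by rewrite -e2 -e.
    - apply: S_muln => //; exact: S_gen.
    - exact SR.
  by have [_ ] := ha i ltac:(lia); apply.
Qed.

Definition Aa (alpha : nat -> nat) := fun i => if i == 0 then 0 else alpha i.
Definition bounded (gs : seq nat) (alpha lam : nat -> nat) :=
  lam 0 = 0 /\ forall i, 1 <= i < size gs -> lam i <= alpha i.

Lemma sig_ind gs i c : i < size gs ->
  sig gs (fun j => if j == i then c else 0) = c * nth 0 gs i.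
Proof.
move=> hi; rewrite (sig_split (fun j => if j == i then c else 0) hi) eqxx.
rewrite /sig big1 ?addn0 //. move=> j _; by case: eqP.
Qed.

Lemma M_eq gs alpha : 0 < size gs ->
  sig gs (Aa alpha) = \sum_(1 <= i < size gs) alpha i * nth 0 gs i.
Proof.
move=> h; rewrite (sig_split0 (Aa alpha) h) /Aa /= mul0n add0n.
apply: eq_big_nat => i /andP [h1 _]; by case: eqP => // e; lia.
Qed.

Lemma sig_bounded gs alpha lam : bounded gs alpha lam ->
  sig gs (Aa alpha) = sig gs lam + sig gs (fun i => Aa alpha i - lam i).
Proof.
move=> [h0 hb]; rewrite sig_add; apply: sig_ext => i hi.
rewrite /Aa; case: eqP => [->|ne]; first by rewrite h0.
have := hb i ltac:(lia); lia.
Qed.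

Lemma rep_bounded S gs alpha (hS : numerical_semigroup S) (hg : generates S gs)
  (ha : is_alpha S gs alpha) s (lam : nat -> nat) :
  Ap S (nth 0 gs 0) s -> s = sig gs lam -> bounded gs alpha lam.
Proof. move=> h e; have [h0 hb] := rep_bounds hS hg ha h e; by split. Qed.

Lemma dominate S gs alpha (hS : numerical_semigroup S) (hg : generates S gs)
  (P : Ap S (nth 0 gs 0) (sig gs (Aa alpha))) lam :
  bounded gs alpha lam ->
  Ap S (nth 0 gs 0) (sig gs lam) /\ preceq S (sig gs lam) (sig gs (Aa alpha)).
Proof.
move=> hb; have e := sig_bounded hb.
split.
- apply: (Ap_down hS (u := sig gs (fun i => Aa alpha i - lam i))); first by rewrite -e.
  + exact: S_rep. + exact: S_rep.
- split; first by rewrite e leq_addr.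
  rewrite e addKn; exact: S_rep.
Qed.

Lemma inj_half S gs alpha (hS : numerical_semigroup S) (hg : generates S gs)
  (ha : is_alpha S gs alpha)
  (P : Ap S (nth 0 gs 0) (sig gs (Aa alpha))) lam mu :
  bounded gs alpha lam -> bounded gs alpha mu -> sig gs lam = sig gs mu ->
  forall i, i < size gs -> mu i <= lam i.
Proof.
move=> hl hm e i hi; rewrite leqNgt; apply/negP => lt.
have i0 : i != 0 by apply/eqP => i0; move: lt; rewrite i0 hl.1 hm.1.
set k := fun j => Aa alpha j - lam j + mu j.
have ek : sig gs k = sig gs (Aa alpha).
  have : sig gs k + sig gs lam = sig gs (Aa alpha) + sig gs mu.
    rewrite (@sig_add gs k lam) (@sig_add gs (Aa alpha) mu); apply: sig_ext => j hj; rewrite /k /Aa.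
    case: eqP => [->|ne]; first by rewrite hl.1 hm.1.
    have := hl.2 j ltac:(lia); lia.
  rewrite e; lia.
have [_ hb] := rep_bounds hS hg ha P (esym ek).
have := hb i ltac:(lia); rewrite /k /Aa (negbTE i0).
have := hl.2 i ltac:(lia); lia.
Qed.

Lemma inj S gs alpha (hS : numerical_semigroup S) (hg : generates S gs)
  (ha : is_alpha S gs alpha)
  (P : Ap S (nth 0 gs 0) (sig gs (Aa alpha))) lam mu :
  bounded gs alpha lam -> bounded gs alpha mu -> sig gs lam = sig gs mu ->
  forall i, i < size gs -> lam i = mu i.
Proof.
move=> hl hm e i hi; apply/eqP; rewrite eqn_leq.
by rewrite (inj_half hS hg ha P hl hm e hi) (inj_half hS hg ha P hm hl (esym e) hi).
Qed.

Lemma key S gs alpha (hS : numerical_semigroup S) (hg : generates S gs)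
  (ha : is_alpha S gs alpha) a :
  Ap S (nth 0 gs 0) a -> unique_rep gs a ->
  (forall i, 1 <= i < size gs -> preceq S (alpha i * nth 0 gs i) a) ->
  a = sig gs (Aa alpha).
Proof.
move=> hA [lam [hl hu]] hp.
have [h0 hb] := rep_bounded hS hg ha hA hl.
rewrite hl; apply: sig_ext => i hi.
rewrite /Aa; case: eqP => [->//|ne].
apply/eqP; rewrite eqn_leq hb ?andTb; last lia.
have [hle Sd] := hp i ltac:(lia).
have [mu emu] := rep_S hg Sd.
have : is_rep gs a (fun j => mu j + (if j == i then alpha i else 0)).
  rewrite /is_rep; change (a = sig gs (fun j => mu j + (if j == i then alpha i else 0))).
  rewrite -(@sig_add gs mu) sig_ind // -emu; lia.
move/hu => /(_ i hi); rewrite eqxx => <-; exact: leq_addl.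
Qed.

Lemma sz_pos S gs alpha (hS : numerical_semigroup S) (hg : generates S gs)
  (ha : is_alpha S gs alpha) : 0 < size gs.
Proof. have := m_pos hS hg ha; by case: (gs). Qed.

Lemma sig_zero0 gs (lam : nat -> nat) : 0 < size gs ->
  sig gs (fun i => if i == 0 then 0 else lam i) = \sum_(1 <= i < size gs) lam i * nth 0 gs i.
Proof.
move=> h; rewrite (sig_split0 _ h) /= mul0n add0n.
apply: eq_big_nat => i /andP [h1 _]; by case: eqP => // e; lia.
Qed.

Lemma ci_P S gs alpha (hS : numerical_semigroup S) (hg : generates S gs)
  (ha : is_alpha S gs alpha) :
  alpha_rectangular S gs alpha <-> Ap S (nth 0 gs 0) (sig gs (Aa alpha)).
Proof.
have sz := sz_pos hS hg ha.
split.
- move=> h; apply/h; exists alpha; split => //; by rewrite M_eq.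
- move=> P x; split.
  + move=> hx; have [lam e] := rep_S hg hx.1.
    have [h0 hb] := rep_bounded hS hg ha hx e.
    exists lam; split => //; by rewrite e (sig_split0 _ sz) h0 mul0n add0n.
  + move=> [lam [hb ->]].
    have hb' : bounded gs alpha (fun i => if i == 0 then 0 else lam i).
      split => // i hi; case: eqP => _; [done| exact: hb].
    rewrite -sig_zero0 //; exact: (dominate hS hg P hb').1.
Qed.

Lemma Ap_bound S m (hS : numerical_semigroup S) :
  exists B, forall w, Ap S m w -> w < B.
Proof.
have [N hN] := hS.2.2; exists (N + m) => w [Sw h].
rewrite ltnNge; apply/negP => le; apply: h; split; first lia.
apply: hN; lia.
Qed.

Lemma to_max S m (hS : numerical_semigroup S) x :
  Ap S m x -> exists b, Ap_maximal S m b /\ preceq S x b.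
Proof.
have [B hB] := Ap_bound m hS.
move=> hx; have := hB x hx.
move: {2}(B - x) (leqnn (B - x)) => d; elim: d x hx => [|d IH] x hx hd hxB; first lia.
case: (classic (forall c, Ap S m c -> preceq S x c -> c = x)) => hm.
- exists x; split; first by split.
  by split => //; rewrite subnn; exact: S_0.
- have [c hc] := not_all_ex_not _ _ hm.
  have [hAc [[hxc Scx] hne]] : Ap S m c /\ preceq S x c /\ c <> x.
    case: (classic (Ap S m c)) => a; last by exfalso; apply: hc => /a.
    case: (classic (preceq S x c)) => p; last by exfalso; apply: hc => _ /p.
    by split => //; split => // e; apply: hc.
  have [b [hb [hcb Sbc]]] := IH c hAc ltac:(have := hB c hAc; lia) (hB c hAc).
  exists b; split => //; split; first lia.
  have -> : b - x = (b - c) + (c - x) by lia.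
  exact: S_addn.
Qed.

Lemma P_unique S gs alpha (hS : numerical_semigroup S) (hg : generates S gs)
  (ha : is_alpha S gs alpha)
  (P : Ap S (nth 0 gs 0) (sig gs (Aa alpha))) s :
  Ap S (nth 0 gs 0) s -> unique_rep gs s.
Proof.
move=> hs; have [lam e] := rep_S hg hs.1.
exists lam; split => // lam' e' i hi.
apply: (inj hS hg ha P) => //.
- exact: (rep_bounded hS hg ha hs e').
- exact: (rep_bounded hS hg ha hs e).
- move: e e'; rewrite /sig /is_rep => e e'; congruence.
Qed.

Lemma P_below S gs alpha (hS : numerical_semigroup S) (hg : generates S gs)
  (ha : is_alpha S gs alpha)
  (P : Ap S (nth 0 gs 0) (sig gs (Aa alpha))) w :
  Ap S (nth 0 gs 0) w -> preceq S w (sig gs (Aa alpha)).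
Proof.
move=> hw; have [lam e] := rep_S hg hw.1.
rewrite e; exact: (dominate hS hg P (rep_bounded hS hg ha hw e)).2.
Qed.

Lemma cii_P S gs alpha (hS : numerical_semigroup S) (hg : generates S gs)
  (ha : is_alpha S gs alpha) :
  (exists a, Ap_maximal S (nth 0 gs 0) a /\
     (forall b, Ap_maximal S (nth 0 gs 0) b -> b = a) /\ unique_rep gs a)
  <-> Ap S (nth 0 gs 0) (sig gs (Aa alpha)).
Proof.
split.
- move=> [a [[hA hmax] [huniq hur]]].
  suff -> : sig gs (Aa alpha) = a by [].
  symmetry; apply: (key hS hg ha hA hur) => i hi.
  have [hAi _] := ha i hi.
  have [b [hb hp]] := to_max hS hAi.
  by rewrite -(huniq b hb).
- move=> P; exists (sig gs (Aa alpha)); split; last split.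
  + split => // b hb [le _]; have [le' _] := P_below hS hg ha P hb.
    apply/eqP; rewrite eqn_leq le le'; done.
  + move=> b [hb hmax]; symmetry; apply: hmax => //; exact: P_below.
  + exact: (P_unique hS hg ha P P).
Qed.

Lemma frob_P S gs alpha f (hS : numerical_semigroup S) (hg : generates S gs)
  (ha : is_alpha S gs alpha) (hf : is_frobenius S f)
  (P : Ap S (nth 0 gs 0) (sig gs (Aa alpha))) :
  (f + Z.of_nat (nth 0%N gs 0%N) = Z.of_nat (sig gs (Aa alpha)))%Z.
Proof.
have mpos := m_pos hS hg ha.
have Sm : S (nth 0 gs 0) by apply: S_gen => //; exact: (sz_pos hS hg ha).
set m := nth 0 gs 0 in mpos Sm P *.
set M := sig gs (Aa alpha) in P *.
case: (Z.lt_trichotomy (f + Z.of_nat m) (Z.of_nat M)) => [lt|[//|gt]]; exfalso.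
- have [n [en Sn]] := hf.2 (Z.of_nat M - Z.of_nat m)%Z ltac:(lia).
  apply: P.2; split; first lia.
  have -> : M - m = n by lia.
  done.
- case: (Z.lt_ge_cases f 0) => fneg.
  + have Sm1 : S (m - 1) by have [n [en Sn]] := hf.2 (Z.of_nat (m - 1)) ltac:(lia); have -> : m - 1 = n by lia.
    have A1 : Ap S m (m - 1) by split => // [[h _]]; lia.
    have [le _] := P_below hS hg ha P A1; lia.
  + have [k ek] : exists k, f = Z.of_nat k by exists (Z.to_nat f); lia.
    have nk : ~ S k by move=> Sk; apply: hf.1; exists k.
    have [w [hw ew]] := Ap_res_exists hS mpos k.
    have [j ej] := Ap_gt_nonS hS Sm mpos hw nk ew.
    have [le _] := P_below hS hg ha P hw.
    rewrite mulSn in ej; lia.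
Qed.

Lemma civ_P S gs alpha f (hS : numerical_semigroup S) (hg : generates S gs)
  (ha : is_alpha S gs alpha) (hf : is_frobenius S f) :
  (f + Z.of_nat (nth 0%N gs 0%N) = Z.of_nat (sig gs (Aa alpha)))%Z <->
  Ap S (nth 0 gs 0) (sig gs (Aa alpha)).
Proof.
have mpos := m_pos hS hg ha.
split; last exact: frob_P.
move=> e.
have [n [en Sn]] := hf.2 (Z.of_nat (sig gs (Aa alpha))) ltac:(lia).
have -> : sig gs (Aa alpha) = n by lia.
split => // [[h1 h2]]; apply: hf.1; exists (n - nth 0 gs 0); split => //; lia.
Qed.

Lemma ciii_P S gs alpha f (hS : numerical_semigroup S) (hg : generates S gs)
  (ha : is_alpha S gs alpha) (hf : is_frobenius S f) :
  (symmetric_sg S f /\ Ap_unique_expression S gs) <->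
  Ap S (nth 0 gs 0) (sig gs (Aa alpha)).
Proof.
have mpos := m_pos hS hg ha.
have Sm : S (nth 0 gs 0) by apply: S_gen => //; exact: (sz_pos hS hg ha).
split.
- move=> [hsym huq].
  have [a [ea Sa]] : inZ S (f + Z.of_nat (nth 0%N gs 0%N))%Z.
    apply/hsym => [[n [en _]]]; lia.
  have hA : Ap S (nth 0 gs 0) a.
    split => // [[h1 h2]]; apply: hf.1; exists (a - nth 0 gs 0); split => //; lia.
  suff <- : a = sig gs (Aa alpha) by [].
  apply: (key hS hg ha hA (huq a hA)) => i hi.
  have [hw _] := ha i hi.
  set w := alpha i * nth 0 gs i in hw *.
  have [n [en Sn]] : inZ S (f + Z.of_nat (nth 0%N gs 0%N) - Z.of_nat w)%Z.
    apply/hsym => [[n [en Sn]]]; apply: hw.2; split; first lia.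
    have -> : w - nth 0 gs 0 = n by lia.
    done.
  split; first lia.
  have -> : a - w = n by lia.
  done.
- move=> P; split; last by move=> s hs; exact: (P_unique hS hg ha P hs).
  have fe := frob_P hS hg ha hf P.
  move=> x; split.
  + move=> [n1 [e1 S1]] [n2 [e2 S2]]; apply: hf.1; exists (n1 + n2); split; first lia.
    exact: S_addn.
  + move=> hn; apply: NNPP => hx; apply: hn.
    case: (Z.lt_ge_cases x 0) => xneg.
    * apply: hf.2; lia.
    * have [k ek] : exists k, x = Z.of_nat k by exists (Z.to_nat x); lia.
      have nk : ~ S k by move=> Sk; apply: hx; exists k.
      have [w [hw ew]] := Ap_res_exists hS mpos k.
      have [j ej] := Ap_gt_nonS hS Sm mpos hw nk ew.
      have [le Sd] := P_below hS hg ha P hw.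
      exists ((sig gs (Aa alpha) - w) + j * nth 0 gs 0); split.
      - rewrite mulSn in ej; lia.
      - apply: S_addn => //; exact: S_muln.
Qed.

Fixpoint vecs (bs : seq nat) : seq (seq nat) :=
  match bs with
  | [::] => [:: [::]]
  | b :: bs' => [seq x :: v | x <- iota 0 b.+1, v <- vecs bs']
  end.

Lemma vecs_cons b bs :
  vecs (b :: bs) = [seq x :: v | x <- iota 0 b.+1, v <- vecs bs].
Proof. by []. Qed.

Lemma size_vecs bs : size (vecs bs) = \prod_(b <- bs) b.+1.
Proof.
elim: bs => [|b bs IH]; first by rewrite big_nil.
rewrite vecs_cons.
by rewrite size_allpairs size_iota IH big_cons.
Qed.

Lemma uniq_vecs bs : uniq (vecs bs).
Proof.
elim: bs => [|b bs IH] //.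
rewrite vecs_cons; apply: allpairs_uniq => //; first exact: iota_uniq.
by move=> [x v] [y w] _ _ /= [-> ->].
Qed.

Lemma mem_vecs bs v : v \in vecs bs <->
  size v = size bs /\ forall i, i < size bs -> nth 0 v i <= nth 0 bs i.
Proof.
elim: bs v => [|b bs IH] v.
- rewrite /= inE; split; first by move/eqP => ->.
  by move=> [/size0nil -> _].
- split.
  + rewrite vecs_cons; move/allpairsP => [[x v'] [hx hv' ->]] /=.
    have [sz hb] := (IH v').1 hv'.
    split; first by rewrite sz.
    case => [|i] hi /=; last exact: hb.
    by move: hx; rewrite mem_iota.
  + case: v => [|x v'] [sz hb] //.
    rewrite vecs_cons; apply: allpairs_f.
    * by rewrite mem_iota /= add0n ltnS (hb 0 isT).
    * apply/IH; split; first by case: sz.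
      by move=> i hi; apply: (hb i.+1).
Qed.

Lemma uniq_map_inj (T1 T2 : eqType) (f : T1 -> T2) s x y :
  uniq (map f s) -> x \in s -> y \in s -> f x = f y -> x = y.
Proof.
elim: s => [//|a s IH] /= /andP [na u].
rewrite !inE => /orP [/eqP ->|hx] /orP [/eqP ->|hy] // e.
- by exfalso; move/negP: na; apply; rewrite e map_f.
- by exfalso; move/negP: na; apply; rewrite -e map_f.
- exact: IH.
Qed.

Definition bsA (gs : seq nat) alpha := [seq Aa alpha i | i <- iota 0 (size gs)].
Definition vec_of (gs : seq nat) (lam : nat -> nat) := [seq lam i | i <- iota 0 (size gs)].

Lemma nth_vec_of gs lam i : i < size gs -> nth 0 (vec_of gs lam) i = lam i.
Proof. move=> h; by rewrite (nth_map 0) ?size_iota // nth_iota. Qed.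

Lemma prod_bs gs alpha : 0 < size gs ->
  \prod_(b <- bsA gs alpha) b.+1 = \prod_(1 <= i < size gs) (alpha i).+1.
Proof.
move=> h; rewrite /bsA big_map.
have -> : \prod_(i <- iota 0 (size gs)) (Aa alpha i).+1 =
          \prod_(0 <= i < size gs) (Aa alpha i).+1 by rewrite /index_iota subn0.
rewrite big_ltn // /Aa /= mul1n.
apply: eq_big_nat => i /andP [h1 _]; by case: eqP => // e; lia.
Qed.

Lemma vec_of_mem gs alpha lam : bounded gs alpha lam -> vec_of gs lam \in vecs (bsA gs alpha).
Proof.
move=> [h0 hb]; apply/mem_vecs; rewrite /vec_of /bsA !size_map; split => // i.
rewrite size_iota => hi; rewrite nth_vec_of // (nth_map 0) ?size_iota // nth_iota // add0n.
rewrite /Aa; case: eqP => [->|ne]; first by rewrite h0.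
apply: hb; lia.
Qed.

Lemma mem_bounded gs alpha v : v \in vecs (bsA gs alpha) ->
  size v = size gs /\ bounded gs alpha (fun i => nth 0 v i).
Proof.
move/mem_vecs; rewrite /bsA size_map size_iota => [[sz hb]]; split => //.
have hb' : forall i, i < size gs -> nth 0 v i <= Aa alpha i.
  move=> i hi; have := hb i hi; by rewrite (nth_map 0) ?size_iota // nth_iota.
split.
- case: (posnP (size gs)) => h.
  + by rewrite nth_default // sz h.
  + have := hb' 0 h; rewrite /Aa /=; lia.
- move=> i /andP [h1 h2]; have := hb' i h2; rewrite /Aa; case: eqP => //; lia.
Qed.

Lemma sig_vec_of gs lam : sig gs (fun i => nth 0 (vec_of gs lam) i) = sig gs lam.
Proof. apply: sig_ext => i hi; exact: nth_vec_of. Qed.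

Lemma cv_P S gs alpha (hS : numerical_semigroup S) (hg : generates S gs)
  (ha : is_alpha S gs alpha) :
  nth 0 gs 0 = \prod_(1 <= i < size gs) (alpha i).+1 <->
  Ap S (nth 0 gs 0) (sig gs (Aa alpha)).
Proof.
have mpos := m_pos hS hg ha.
have sz := sz_pos hS hg ha.
have Sm : S (nth 0 gs 0) by apply: S_gen.
set m := nth 0 gs 0 in mpos Sm *.
set phi := fun v => sig gs (fun i => nth 0 v i) %% m.
have surj : forall r, r < m -> r \in map phi (vecs (bsA gs alpha)).
  move=> r hr; have [w [hw ew]] := Ap_res_exists hS mpos r.
  have [lam e] := rep_S hg hw.1.
  have hb := rep_bounded hS hg ha hw e.
  have -> : r = phi (vec_of gs lam).
    by rewrite /phi sig_vec_of -e ew modn_small.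
  apply: map_f; exact: vec_of_mem.
have sub1 : {subset iota 0 m <= map phi (vecs (bsA gs alpha))}.
  move=> r; rewrite mem_iota add0n => /andP [_ hr]; exact: surj.
have szv : size (map phi (vecs (bsA gs alpha))) = \prod_(1 <= i < size gs) (alpha i).+1.
  by rewrite size_map size_vecs prod_bs.
split.
- move=> hm.
  have U : uniq (map phi (vecs (bsA gs alpha))).
    apply: (leq_size_uniq (iota_uniq 0 m) sub1); by rewrite size_iota szv hm.
  have [w [hw ew]] := Ap_res_exists hS mpos (sig gs (Aa alpha)).
  have [lam e] := rep_S hg hw.1.
  have hb := rep_bounded hS hg ha hw e.
  have hbA : bounded gs alpha (Aa alpha).
    split => // i hi; rewrite /Aa; case: eqP => //; lia.
  have ev : vec_of gs lam = vec_of gs (Aa alpha).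
    apply: (uniq_map_inj U); try exact: vec_of_mem.
    by rewrite /phi !sig_vec_of -e ew.
  have <- : w = sig gs (Aa alpha) by rewrite e -sig_vec_of ev sig_vec_of.
  done.
- move=> P.
  have U : uniq (map phi (vecs (bsA gs alpha))).
    rewrite map_inj_in_uniq ?uniq_vecs // => v1 v2 h1 h2 e.
    have [s1 b1] := mem_bounded h1.
    have [s2 b2] := mem_bounded h2.
    have [A1 _] := dominate hS hg P b1.
    have [A2 _] := dominate hS hg P b2.
    have es := Ap_res_unique hS Sm A1 A2 e.
    apply: (eq_from_nth (x0 := 0)); first by rewrite s1 s2.
    move=> i hi; apply: (inj hS hg ha P b1 b2 es); by rewrite -s1.
  have le1 := uniq_leq_size U (s2 := iota 0 m).
  have le2 := uniq_leq_size (iota_uniq 0 m) sub1.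
  have : size (map phi (vecs (bsA gs alpha))) <= size (iota 0 m).
    apply: le1 => r /mapP [v _ ->]; rewrite mem_iota add0n /=; exact: ltn_pmod.
  move: le2; rewrite szv size_iota; lia.
Qed.

Unset Implicit Arguments.

Theorem mainTheorem2 (S : nat -> Prop) (gs : seq nat) (f : Z) (alpha : nat -> nat)
  (hS : numerical_semigroup S) (hgs : min_gen_system S gs)
  (hf : is_frobenius S f) (halpha : is_alpha S gs alpha) :
  let m := nth 0 gs 0 in
  let ci := alpha_rectangular S gs alpha in
  let cii := (exists a, Ap_maximal S m a /\
                 (forall b, Ap_maximal S m b -> b = a) /\ unique_rep gs a) in
  let ciii := symmetric_sg S f /\ Ap_unique_expression S gs in
  let civ := (f + Z.of_nat m = Z.of_nat (\sum_(1 <= i < size gs) alpha i * nth 0 gs i))%Z in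
  let cv := m = \prod_(1 <= i < size gs) (alpha i).+1 in
  (ci <-> cii) /\ (cii <-> ciii) /\ (ciii <-> civ) /\ (civ <-> cv).
Proof.
have hg : generates S gs by case: hgs => _ [].
have sz := sz_pos hS hg halpha.
have h1 := ci_P hS hg halpha.
have h2 := cii_P hS hg halpha.
have h3 := ciii_P hS hg halpha hf.
have h4 := civ_P hS hg halpha hf.
have h5 := cv_P hS hg halpha.
move=> m ci cii ciii civ cv.
rewrite /ci /cii /ciii /civ /cv /m -M_eq //.
tauto.
Qed.
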